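(* Let $S_1=\mathbb{R}/2\pi\mathbb{Z}$ and let $u:[0,T)\times S_1\to\mathbb{R}$ be a smooth solution of the Camassa–Holm equation $$\partial_t u-\tfrac14\partial_{txx}u+3\,\partial_x u\,u-\tfrac12\,\partial_{xx}u\,\partial_x u-\tfrac14\,\partial_{xxx}u\,u=0 .$$ On $N=S_1\times\mathbb{R}_{>0}$ with coordinates $(\theta,r)$ and the Euclidean metric in polar coordinates $h=r^2(\mathrm{d}\theta)^2+(\mathrm{d}r)^2$ (i.e. $N\cong\mathbb{R}^2\setminus\{0\}$), define the time-dependent vector field $$v(t,\theta,r)=u(t,\theta)\,\partial_\theta+\tfrac{r}{2}\,\partial_\theta u(t,\theta)\,\partial_r .$$ Then there exists a function $p:[0,T)\times N\to\mathbb{R}$ such that $$\partial_t v+\nabla_v v=-\nabla p,\qquad \operatorname{div}(\rho v)=0,\quad\text{with }\rho(\theta,r)=r^{-4},$$ where $\nabla$ is the Levi-Civita connection of $h$, $\nabla p$ the $h$-gradient, and $\operatorname{div}$ the Euclidean divergence (with respect to the area form $r\,\mathrm{d}r\wedge\mathrm{d}\theta$). Equivalently, $v$ solves the incompressible Euler equation for the density $r^{-4}\,r\,\mathrm{d}r\,\mathrm{d}\theta$.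
   Context: Here $\partial_x$ and $\partial_\theta$ both denote differentiation in the angular variable. The flow $\varphi$ of $u$ and the map $\Psi(\theta,r)=r\sqrt{\partial_\theta\varphi(\theta)}\,e^{i\varphi(\theta)}$ are related by $\partial_t\Psi\circ\Psi^{-1}=v$; this is not needed for the statement. *)

(* Defs.v *)
From Stdlib Require Import Reals Lra.
Open Scope R_scope.

Definition Dom (T t : R) : Prop := 0 <= t < T.

(** One-sided-aware derivative of f at x within a domain D (used for the time
    variable on [0,T), so that t = 0 is included). *)
Definition deriv_within (D : R -> Prop) (f : R -> R) (x l : R) : Prop :=
  forall eps : R, 0 < eps -> exists delta : R, 0 < delta /\
    forall h : R, h <> 0 -> D (x + h) -> Rabs h < delta ->
      Rabs ((f (x + h) - f x) / h - l) < eps.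

Definition jcont (T : R) (f : R -> R -> R) : Prop :=
  forall t x, Dom T t -> forall eps, 0 < eps -> exists delta, 0 < delta /\
    forall s y, Dom T s -> Rabs (s - t) < delta -> Rabs (y - x) < delta ->
      Rabs (f s y - f t x) < eps.

Fixpoint Ck (T : R) (k : nat) (f : R -> R -> R) : Prop :=
  match k with
  | O => jcont T f
  | S k' => jcont T f /\
      exists ft fx : R -> R -> R,
        (forall t x, Dom T t -> deriv_within (Dom T) (fun s => f s x) t (ft t x)) /\
        (forall t x, Dom T t -> derivable_pt_lim (fun y => f t y) x (fx t x)) /\
        Ck T k' ft /\ Ck T k' fx
  end.

Definition smooth_on (T : R) (f : R -> R -> R) : Prop := forall k, Ck T k f.

Inductive idx : Set := Th | Rr.

Definition sum2 (F : idx -> R) : R := F Th + F Rr.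

Definition partial (i : idx) (f : R -> R -> R) (th r l : R) : Prop :=
  match i with
  | Th => derivable_pt_lim (fun a => f a r) th l
  | Rr => derivable_pt_lim (fun b => f th b) r l
  end.

Definition g (a b : idx) (r : R) : R :=
  match a, b with
  | Th, Th => r ^ 2
  | Rr, Rr => 1
  | _, _ => 0
  end.

Definition ginv (a b : idx) (r : R) : R :=
  match a, b with
  | Th, Th => / (r ^ 2)
  | Rr, Rr => 1
  | _, _ => 0
  end.

Definition dg (m a b : idx) (r : R) : R :=
  match m with
  | Th => 0
  | Rr => match a, b with Th, Th => 2 * r | _, _ => 0 end
  end.

Lemma dg_spec : forall m a b th r,
  partial m (fun _ y => g a b y) th r (dg m a b r).
Proof.
  intros m a b th r; destruct m; unfold partial.
  - apply derivable_pt_lim_const.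
  - destruct a, b; unfold g, dg; try apply derivable_pt_lim_const.
    replace (2 * r) with (INR 2 * r ^ (2 - 1)) by (simpl; ring).
    apply (derivable_pt_lim_pow r 2).
Qed.

Lemma ginv_spec : forall a c r, 0 < r ->
  sum2 (fun b => ginv a b r * g b c r) = if (match a, c with Th, Th | Rr, Rr => true | _, _ => false end) then 1 else 0.
Proof.
  intros a c r Hr; destruct a, c; unfold sum2; simpl; try ring.
  field; lra.
Qed.

(** Christoffel symbols of the Levi-Civita connection of h:
    Gamma^k_{ij} = 1/2 g^{kl} (d_i g_{jl} + d_j g_{il} - d_l g_{ij}). *)
Definition Gam (k i j : idx) (r : R) : R :=
  / 2 * sum2 (fun l => ginv k l r * (dg i j l r + dg j i l r - dg l i j r)).

(** Riemannian (Euclidean) area density in these coordinates: r dr dtheta. *)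
Definition vol (r : R) : R := r.

Definition rho (r : R) : R := / (r ^ 4).

(** The vector field v = u d_theta + (r/2) (d_theta u) d_r, given u and
    ux = d_theta u. *)
Definition vfield (u ux : R -> R -> R) (t th r : R) (k : idx) : R :=
  match k with
  | Th => u t th
  | Rr => r / 2 * ux t th
  end.

(* Main.v *)
Require Import Defs.
From Stdlib Require Import Reals Lra FunctionalExtensionality.
From Coquelicot Require Import Coquelicot.
Open Scope R_scope.

Lemma dw_unique T f t l1 l2 : Dom T t ->
  deriv_within (Dom T) f t l1 -> deriv_within (Dom T) f t l2 -> l1 = l2.
Proof.
  intros [H0 H1] D1 D2.
  destruct (Req_dec l1 l2) as [|Hne]; auto. exfalso.
  assert (He : 0 < Rabs (l1 - l2) / 2) by (assert (l1 - l2 <> 0) by lra; pose proof (Rabs_pos_lt _ H); lra).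
  destruct (D1 _ He) as [d1 [Hd1 P1]]. destruct (D2 _ He) as [d2 [Hd2 P2]].
  set (h := Rmin d1 (Rmin d2 (T - t)) / 2).
  assert (Hm1 : Rmin d1 (Rmin d2 (T - t)) <= d1) by apply Rmin_l.
  assert (Hm2 : Rmin d1 (Rmin d2 (T - t)) <= d2) by (eapply Rle_trans; [apply Rmin_r|apply Rmin_l]).
  assert (Hm3 : Rmin d1 (Rmin d2 (T - t)) <= T - t) by (eapply Rle_trans; [apply Rmin_r|apply Rmin_r]).
  assert (Hp : 0 < Rmin d1 (Rmin d2 (T - t))) by (repeat apply Rmin_pos; lra).
  assert (hpos : 0 < h) by (unfold h; lra).
  assert (Dh : Dom T (t + h)) by (unfold Dom, h in *; lra).
  assert (Ha : Rabs h < d1) by (rewrite Rabs_pos_eq; unfold h in *; lra).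
  assert (Hb : Rabs h < d2) by (rewrite Rabs_pos_eq; unfold h in *; lra).
  specialize (P1 h ltac:(lra) Dh Ha). specialize (P2 h ltac:(lra) Dh Hb).
  set (q := (f (t + h) - f t) / h) in *.
  assert (Rabs (l1 - l2) <= Rabs (q - l1) + Rabs (q - l2)).
  { replace (l1 - l2) with (-(q - l1) + (q - l2)) by ring.
    eapply Rle_trans; [apply Rabs_triang|]. rewrite Rabs_Ropp; lra. }
  lra.
Qed.

Lemma dw_cont T f s l : Dom T s -> deriv_within (Dom T) f s l ->
  forall eps, 0 < eps -> exists d, 0 < d /\ forall y, Dom T y -> Rabs (y - s) < d ->
    Rabs (f y - f s) < eps.
Proof.
  intros Ds D eps He.
  destruct (D 1 ltac:(lra)) as [d1 [Hd1 P]].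
  assert (Hl : 0 < Rabs l + 1) by (pose proof (Rabs_pos l); lra).
  exists (Rmin d1 (eps / (Rabs l + 1))). split.
  { apply Rmin_pos; auto. apply Rdiv_lt_0_compat; lra. }
  intros y Dy Hy.
  destruct (Req_dec y s) as [->|Hne]. { rewrite Rminus_diag, Rabs_R0; lra. }
  assert (Hh : y - s <> 0) by lra.
  assert (Hy1 : Rabs (y - s) < d1) by (eapply Rlt_le_trans; [apply Hy|apply Rmin_l]).
  assert (Hy2 : Rabs (y - s) < eps / (Rabs l + 1)) by (eapply Rlt_le_trans; [apply Hy|apply Rmin_r]).
  specialize (P (y - s) Hh ltac:(replace (s + (y - s)) with y by ring; auto) Hy1).
  replace (s + (y - s)) with y in P by ring.
  set (q := (f y - f s) / (y - s)) in *.
  assert (Eq : f y - f s = q * (y - s)) by (unfold q; field; auto).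
  rewrite Eq, Rabs_mult.
  assert (Rabs q < Rabs l + 1).
  { replace q with ((q - l) + l) by ring. eapply Rle_lt_trans; [apply Rabs_triang|]. lra. }
  apply Rmult_lt_compat_r with (r := Rabs (y - s)) in H; [| apply Rabs_pos_lt; auto].
  apply Rmult_lt_compat_l with (r := Rabs l + 1) in Hy2; auto.
  replace ((Rabs l + 1) * (eps / (Rabs l + 1))) with eps in Hy2 by (field; lra).
  lra.
Qed.

Lemma dw_mvt T f f' a b : Dom T a -> Dom T b ->
  (forall s, Dom T s -> deriv_within (Dom T) f s (f' s)) ->
  exists c, Rmin a b <= c <= Rmax a b /\ f b - f a = f' c * (b - a).
Proof.
  intros Da Db Hd.
  set (m := Rmin a b). set (M := Rmax a b).
  assert (Dm : Dom T m) by (unfold m, Rmin; destruct Rle_dec; auto).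
  assert (DM : Dom T M) by (unfold M, Rmax; destruct Rle_dec; auto).
  set (F := fun s => f (Rmax m s)).
  assert (Fa : F a = f a) by (unfold F; rewrite Rmax_right; auto; apply Rmin_l).
  assert (Fb : F b = f b) by (unfold F; rewrite Rmax_right; auto; apply Rmin_r).
  destruct (MVT_gen F a b f') as [c [Hc E]].
  - intros x Hx. apply is_derive_Reals.
    fold m M in Hx.
    assert (Dx : Dom T x) by (unfold Dom in *; lra).
    apply (derivable_pt_lim_locally_ext f F x m T); [unfold Dom in *; lra| |].
    + intros z Hz. unfold F. rewrite Rmax_right; lra.
    + intros eps He. destruct (Hd x Dx eps He) as [d [Hd0 P]].
      exists (mkposreal (Rmin d (Rmin (x - m) (T - x))) ltac:(repeat apply Rmin_pos; unfold Dom in *; lra)).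
      intros h Hh0 Hh. simpl in Hh.
      assert (Rmin d (Rmin (x - m) (T - x)) <= d) by apply Rmin_l.
      assert (Rmin d (Rmin (x - m) (T - x)) <= T - x) by (eapply Rle_trans; [apply Rmin_r|apply Rmin_r]).
      assert (Rmin d (Rmin (x - m) (T - x)) <= x - m) by (eapply Rle_trans; [apply Rmin_r|apply Rmin_l]).
      apply P; auto; [|lra].
      unfold Dom in *; apply Rabs_def2 in Hh; lra.
  - intros x Hx. fold m M in Hx.
    assert (Dx : Dom T x) by (unfold Dom in *; lra).
    intros eps He. destruct (dw_cont T f x (f' x) Dx (Hd x Dx) eps He) as [d [Hd0 P]].
    exists (Rmin d (T - x)). split; [apply Rmin_pos; unfold Dom in *; lra|].
    intros y [_ Hy]. simpl in Hy. unfold R_dist in *.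
    assert (Rmin d (T - x) <= d) by apply Rmin_l.
    assert (Rmin d (T - x) <= T - x) by apply Rmin_r.
    unfold F. rewrite (Rmax_right m x) by lra.
    apply Rabs_def2 in Hy.
    apply P.
    + unfold Dom in *. split; [eapply Rle_trans; [|apply Rmax_l]; lra|].
      unfold Rmax; destruct Rle_dec; lra.
    + unfold Rmax; destruct Rle_dec; apply Rabs_def1; lra.
  - exists c. split; auto. rewrite <- Fa, <- Fb; auto.
Qed.

Lemma dw_minus T f g f' g' t : deriv_within (Dom T) f t f' -> deriv_within (Dom T) g t g' ->
  deriv_within (Dom T) (fun s => f s - g s) t (f' - g').
Proof.
  intros Hf Hg eps He.
  destruct (Hf (eps/2) ltac:(lra)) as [d1 [H1 P1]]. destruct (Hg (eps/2) ltac:(lra)) as [d2 [H2 P2]].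
  exists (Rmin d1 d2). split; [apply Rmin_pos; auto|].
  intros h hn Dh Hh.
  specialize (P1 h hn Dh ltac:(eapply Rlt_le_trans; [apply Hh|apply Rmin_l])).
  specialize (P2 h hn Dh ltac:(eapply Rlt_le_trans; [apply Hh|apply Rmin_r])).
  replace ((f (t + h) - g (t + h) - (f t - g t)) / h - (f' - g'))
    with (((f (t + h) - f t) / h - f') - ((g (t + h) - g t) / h - g')) by (field; auto).
  eapply Rle_lt_trans; [apply Rabs_triang|]. rewrite Rabs_Ropp. lra.
Qed.

Lemma mixed T (u ut ux utx : R -> R -> R)
  (Hut : forall t x, Dom T t -> deriv_within (Dom T) (fun s => u s x) t (ut t x))
  (Hux : forall t x, Dom T t -> derivable_pt_lim (u t) x (ux t x))
  (Hutx : forall t x, Dom T t -> derivable_pt_lim (ut t) x (utx t x))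
  (Hc : forall t x, Dom T t -> forall eps, 0 < eps -> exists d, 0 < d /\
      forall s y, Dom T s -> Rabs (s - t) < d -> Rabs (y - x) < d -> Rabs (utx s y - utx t x) < eps) :
  forall t x, Dom T t -> deriv_within (Dom T) (fun s => ux s x) t (utx t x).
Proof.
  intros t x Dt eps He.
  destruct (Hc t x Dt (eps/2) ltac:(lra)) as [d [Hd P]].
  exists d. split; auto. intros h hn Dh Hh.
  assert (Hah : 0 < Rabs h) by (apply Rabs_pos_lt; auto).
  assert (He1 : 0 < Rabs h * eps / 8) by (apply Rdiv_lt_0_compat; [apply Rmult_lt_0_compat|]; lra).
  destruct (Hux (t + h) x Dh _ He1) as [d1 P1].
  destruct (Hux t x Dt _ He1) as [d2 P2].
  set (k := Rmin d (Rmin d1 d2) / 2).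
  assert (Hm : 0 < Rmin d (Rmin d1 d2)) by (repeat apply Rmin_pos; auto; apply cond_pos).
  assert (Rmin d (Rmin d1 d2) <= d) by apply Rmin_l.
  assert (Rmin d (Rmin d1 d2) <= d1) by (eapply Rle_trans; [apply Rmin_r|apply Rmin_l]).
  assert (Rmin d (Rmin d1 d2) <= d2) by (eapply Rle_trans; [apply Rmin_r|apply Rmin_r]).
  assert (kp : 0 < k) by (unfold k; lra).
  assert (Hk : Rabs k = k) by (apply Rabs_pos_eq; lra).
  specialize (P1 k ltac:(lra) ltac:(rewrite Hk; unfold k; lra)).
  specialize (P2 k ltac:(lra) ltac:(rewrite Hk; unfold k; lra)).
  destruct (dw_mvt T (fun s => u s (x + k) - u s x) (fun s => ut s (x + k) - ut s x) t (t + h) Dt Dh)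
    as [c [Hc1 E1]].
  { intros s Ds. apply dw_minus; auto. }
  assert (Dc : Dom T c).
  { unfold Dom in *. unfold Rmin, Rmax in Hc1. destruct Rle_dec; lra. }
  pose proof (MVT_gen (ut c) x (x + k) (utx c)) as M. cbv zeta in M.
  destruct M as [xi [Hxi E2]].
  { intros y _. apply is_derive_Reals. apply Hutx; auto. }
  { intros y _. apply derivable_continuous_pt. exists (utx c y). apply Hutx; auto. }
  rewrite Rmin_left in Hxi by lra. rewrite Rmax_right in Hxi by lra.
  assert (Hct : Rabs (c - t) < d).
  { apply Rabs_def2 in Hh. unfold Rmin, Rmax in Hc1. destruct Rle_dec; apply Rabs_def1; lra. }
  assert (Hxx : Rabs (xi - x) < d) by (apply Rabs_def1; unfold k in *; lra).
  specialize (P c xi Dc Hct Hxx).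
  rewrite E2 in E1. replace (t + h - t) with h in E1 by ring.
  set (a := utx c xi) in *.
  set (E := ((u (t + h) (x + k) - u (t + h) x) / k - ux (t + h) x)) in *.
  set (F := ((u t (x + k) - u t x) / k - ux t x)) in *.
  replace (x + k) with (x + k) in * by ring.
  assert (Eq : (ux (t + h) x - ux t x) / h - utx t x = (a - utx t x) + (F - E) / h).
  { unfold E, F. apply (Rmult_eq_reg_r (h * k)); [|apply Rmult_integral_contrapositive; split; lra].
    replace ((a - utx t x + ((u t (x + k) - u t x) / k - ux t x - ((u (t + h) (x + k) - u (t + h) x) / k - ux (t + h) x)) / h) * (h * k))
      with ((a - utx t x) * (h * k) + ((u t (x + k) - u t x) - (u (t + h) (x + k) - u (t + h) x)) - (ux t x - ux (t + h) x) * k) by (field; lra).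
    rewrite <- Rminus_0_r at 1.
    replace (u t (x + k) - u t x - (u (t + h) (x + k) - u (t + h) x)) with (- (a * k * h)) by lra.
    field; lra. }
  rewrite Eq.
  eapply Rle_lt_trans; [apply Rabs_triang|].
  unfold Rdiv. rewrite Rabs_mult, Rabs_Rinv by auto.
  assert (Rabs (F - E) < Rabs h * eps / 4).
  { eapply Rle_lt_trans; [apply Rabs_triang|]. rewrite Rabs_Ropp. lra. }
  assert (Rabs (F - E) * / Rabs h < eps / 4).
  { apply (Rmult_lt_reg_r (Rabs h)); auto. field_simplify; lra. }
  lra.
Qed.

Lemma dw_scal T f c l t : deriv_within (Dom T) f t l ->
  deriv_within (Dom T) (fun s => c * f s) t (c * l).
Proof.
  intros H eps He.
  destruct (H (eps / (Rabs c + 1))) as [d [Hd P]].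
  { apply Rdiv_lt_0_compat; auto. pose proof (Rabs_pos c); lra. }
  exists d; split; auto. intros h hn Dh Hh. specialize (P h hn Dh Hh).
  replace ((c * f (t + h) - c * f t) / h - c * l) with (c * ((f (t + h) - f t) / h - l)) by (field; auto).
  rewrite Rabs_mult.
  pose proof (Rabs_pos c). pose proof (Rabs_pos ((f (t + h) - f t) / h - l)).
  assert (Rabs c * Rabs ((f (t + h) - f t) / h - l) <= Rabs c * (eps / (Rabs c + 1))).
  { apply Rmult_le_compat_l; lra. }
  assert (Rabs c * (eps / (Rabs c + 1)) < eps).
  { apply (Rmult_lt_reg_r (Rabs c + 1)); [lra|]. field_simplify; lra. }
  lra.
Qed.

Lemma per_deriv f x c l : (forall y, f (y + c) = f y) ->
  derivable_pt_lim f (x + c) l -> derivable_pt_lim f x l.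
Proof.
  intros Hp H eps He. destruct (H eps He) as [d P]. exists d. intros h hn Hh.
  specialize (P h hn Hh). replace (x + c + h) with ((x + h) + c) in P by ring.
  rewrite !Hp in P. auto.
Qed.

Theorem theorem1p1 (T : R) (u ut ux uxx uxxx utx utxx : R -> R -> R)
  (Hsmooth : smooth_on T u)
  (Hper : forall t x, u t (x + 2 * PI) = u t x)
  (Hut : forall t x, Dom T t -> deriv_within (Dom T) (fun s => u s x) t (ut t x))
  (Hux : forall t x, Dom T t -> derivable_pt_lim (u t) x (ux t x))
  (Huxx : forall t x, Dom T t -> derivable_pt_lim (ux t) x (uxx t x))
  (Huxxx : forall t x, Dom T t -> derivable_pt_lim (uxx t) x (uxxx t x))
  (Hutx : forall t x, Dom T t -> derivable_pt_lim (ut t) x (utx t x))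
  (Hutxx : forall t x, Dom T t -> derivable_pt_lim (utx t) x (utxx t x))
  (HCH : forall t x, Dom T t ->
     ut t x - / 4 * utxx t x + 3 * ux t x * u t x
       - / 2 * uxx t x * ux t x - / 4 * uxxx t x * u t x = 0) :
  exists p : R -> R -> R -> R,
    (forall t th r, p t (th + 2 * PI) r = p t th r) /\
    forall t th r, Dom T t -> 0 < r ->
      exists (dtv : idx -> R) (dv : idx -> idx -> R) (dp : idx -> R) (ddiv : idx -> R),
        (forall k, deriv_within (Dom T) (fun s => vfield u ux s th r k) t (dtv k)) /\
        (forall i k, partial i (fun a b => vfield u ux t a b k) th r (dv i k)) /\
        (forall i, partial i (p t) th r (dp i)) /\
        (forall i, partial i (fun a b => vol b * (rho b * vfield u ux t a b i)) th r (ddiv i)) /\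
        (* d_t v + nabla_v v = - grad p *)
        (forall k,
           dtv k + sum2 (fun i => vfield u ux t th r i * dv i k)
                 + sum2 (fun i => sum2 (fun j =>
                      Gam k i j r * vfield u ux t th r i * vfield u ux t th r j))
           = - sum2 (fun l => ginv k l r * dp l)) /\
        (* div (rho v) = 0 *)
        / vol r * sum2 ddiv = 0.
Proof.
  destruct (Hsmooth 2%nat) as [_ [ft [fx [Hft [_ [[_ [ftt [ftx [_ [Hftx [_ Hcftx]]]]]] _]]]]]].
  assert (Eft : forall t x, Dom T t -> ft t x = ut t x).
  { intros t x Dt. eapply dw_unique; eauto. }
  assert (Eutx : forall t x, Dom T t -> utx t x = ftx t x).
  { intros t x Dt. eapply uniqueness_limite; [apply Hutx; auto|].
    eapply derivable_pt_lim_ext; [|apply Hftx; auto]. intros z; simpl; auto. }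
  assert (Hc : forall t x, Dom T t -> forall eps, 0 < eps -> exists d, 0 < d /\
      forall s y, Dom T s -> Rabs (s - t) < d -> Rabs (y - x) < d -> Rabs (utx s y - utx t x) < eps).
  { intros t x Dt eps He. destruct (Hcftx t x Dt eps He) as [d [Hd P]].
    exists d; split; auto. intros s y Ds H1 H2. rewrite !Eutx; auto. }
  pose proof (mixed T u ut ux utx Hut Hux Hutx Hc) as Hmix.
  assert (Pux : forall t x, Dom T t -> ux t (x + 2 * PI) = ux t x).
  { intros t x Dt. eapply uniqueness_limite; [|apply Hux; auto].
    apply (per_deriv _ _ (2 * PI)); [apply Hper|apply Hux; auto]. }
  assert (Puxx : forall t x, Dom T t -> uxx t (x + 2 * PI) = uxx t x).
  { intros t x Dt. eapply uniqueness_limite; [|apply Huxx; auto].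
    apply (per_deriv _ _ (2 * PI)); [intros; apply Pux; auto|apply Huxx; auto]. }
  assert (Put : forall t x, Dom T t -> ut t (x + 2 * PI) = ut t x).
  { intros t x Dt. eapply dw_unique; [apply Dt| |apply Hut; auto].
    assert (E : (fun s => u s (x + 2 * PI)) = (fun s => u s x)).
    { apply functional_extensionality; intros; apply Hper. }
    rewrite <- E. apply Hut; auto. }
  assert (Putx : forall t x, Dom T t -> utx t (x + 2 * PI) = utx t x).
  { intros t x Dt. eapply uniqueness_limite; [|apply Hutx; auto].
    apply (per_deriv _ _ (2 * PI)); [intros; apply Put; auto|apply Hutx; auto]. }
  set (G := fun t a => utx t a + u t a * uxx t a + ux t a ^ 2 / 2 - 2 * u t a ^ 2).
  exists (fun t a b => if Rle_dec 0 t then if Rlt_dec t T then -(b ^ 2) / 4 * G t a else 0 else 0).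
  split.
  { intros t th r. destruct (Rle_dec 0 t); [destruct (Rlt_dec t T)|]; auto.
    assert (Dt : Dom T t) by (split; auto; lra).
    unfold G. rewrite Putx, Hper, Puxx, Pux; auto. }
  intros t th r Dt Hr.
  assert (Ep : forall a b, (if Rle_dec 0 t then if Rlt_dec t T then -(b ^ 2) / 4 * G t a else 0 else 0)
                 = -(b ^ 2) / 4 * G t a).
  { intros a b. destruct Dt. destruct (Rle_dec 0 t); [destruct (Rlt_dec t T)|]; lra. }
  assert (Iux : is_derive (fun x0 => u t x0) th (ux t th)) by (apply is_derive_Reals; auto).
  assert (Iuxx : is_derive (fun x0 => ux t x0) th (uxx t th)) by (apply is_derive_Reals; auto).
  assert (Iuxxx : is_derive (fun x0 => uxx t x0) th (uxxx t th)) by (apply is_derive_Reals; auto).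
  assert (Iutx : is_derive (fun x0 => utx t x0) th (utxx t th)) by (apply is_derive_Reals; auto).
  assert (Dux : Derive (fun x : R => u t x) th = ux t th) by (apply is_derive_unique; apply is_derive_Reals; auto).
  assert (Duxx : Derive (fun x : R => ux t x) th = uxx t th) by (apply is_derive_unique; apply is_derive_Reals; auto).
  assert (Duxxx : Derive (fun x : R => uxx t x) th = uxxx t th) by (apply is_derive_unique; apply is_derive_Reals; auto).
  assert (Dutx : Derive (fun x : R => utx t x) th = utxx t th) by (apply is_derive_unique; apply is_derive_Reals; auto).
  set (Gth := utxx t th + ux t th * uxx t th + u t th * uxxx t th + ux t th * uxx t th
              - 4 * u t th * ux t th).
  assert (DG : is_derive (fun a => G t a) th Gth).
  { unfold G. auto_derive.
    - repeat split; eexists; eauto.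
    - rewrite ?Dux, ?Duxx, ?Duxxx, ?Dutx, ?DGd.
      unfold Gth; field. }
  assert (DGd : Derive (fun x : R => G t x) th = Gth) by (apply is_derive_unique; auto).

  exists (fun k => match k with Th => ut t th | Rr => r / 2 * utx t th end).
  exists (fun i k => match i, k with Th, Th => ux t th | Rr, Th => 0
                    | Th, Rr => r / 2 * uxx t th | Rr, Rr => ux t th / 2 end).
  exists (fun i => match i with Th => -(r ^ 2) / 4 * Gth | Rr => -(2 * r) / 4 * G t th end).
  exists (fun i => match i with Th => r * (/ r ^ 4 * ux t th) | Rr => - ux t th / r ^ 3 end).
  split; [|split; [|split; [|split; [|split]]]].
  - intros [|]; simpl.
    + apply Hut; auto.
    + apply dw_scal, Hmix; auto.
  - intros [|] [|]; simpl.
    + apply Hux; auto.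
    + apply is_derive_Reals. auto_derive; [eexists; eauto|].
      rewrite ?Dux, ?Duxx, ?Duxxx, ?Dutx, ?DGd. field.
    + apply derivable_pt_lim_const.
    + apply is_derive_Reals. auto_derive; auto. field.
  - intros [|]; simpl.
    + eapply derivable_pt_lim_ext; [intros; symmetry; apply Ep|].
      apply is_derive_Reals. auto_derive; [eexists; eauto|].
      rewrite ?Dux, ?Duxx, ?Duxxx, ?Dutx, ?DGd. field.
    + eapply derivable_pt_lim_ext; [intros; symmetry; apply Ep|].
      apply is_derive_Reals. auto_derive; auto. field.
  - intros [|]; simpl; unfold vol, rho.
    + apply is_derive_Reals. auto_derive; [eexists; eauto|].
      rewrite ?Dux, ?Duxx, ?Duxxx, ?Dutx, ?DGd. field; lra.
    + apply is_derive_Reals. auto_derive; [repeat apply Rmult_integral_contrapositive_currified; lra|]. field; lra.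
  - intros [|]; unfold sum2, Gam, sum2, ginv, dg, vfield; simpl.
    + pose proof (HCH t th Dt). transitivity (ut t th + 2 * u t th * ux t th); [field; lra|]. transitivity (Gth / 4); [|field; lra]. unfold Gth. lra.
    + unfold G. field; lra.
  - unfold sum2, vol. field_simplify; lra.
Qed.
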